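(* Let $\alpha>0$, $\sigma>0$, and let $\partial^-$ be the linear operator on $\mathbb C[z]$ defined by $\partial^-c_n=nc_{n-1}$ ($n\in\mathbb N_0$, with $c_{-1}:=0$). Then $\partial^-$, regarded as a densely defined operator in $L^2(\alpha\mathbb N_0,\pi_{\alpha,\sigma})$, is closable. Denoting its closure again by $\partial^-$, for each $z\in\mathbb C$ the coherent state $\mathcal E(\cdot,z)$ belongs to the domain of $\sigma\partial^-$ and is an eigenfunction of $\sigma\partial^-$ with eigenvalue $z$ (equivalently, an eigenfunction of $\partial^-$ with eigenvalue $z/\sigma$).
   Context: Let $\pi_{\alpha,\sigma}=\exp(-\sigma/\alpha^2)\sum_{n\ge0}\frac{1}{n!}(\sigma/\alpha^2)^n\delta_{\alpha n}$ on $\alpha\mathbb N_0$ ($\delta_y$ the Dirac measure at $y$), and let $(c_n)_{n\ge0}$ be the monic polynomial sequence orthogonal with respect to $\pi_{\alpha,\sigma}$, with generating function $\sum_{n\ge0}\frac{t^n}{n!}c_n(z)=\exp\big(\frac z\alpha\log(1+t\alpha)-\frac{\sigma t}{\alpha}\big)$; one has $\|c_n\|^2_{L^2(\alpha\mathbb N_0,\pi_{\alpha,\sigma})}=n!\sigma^n$ and polynomials are dense in $L^2(\alpha\mathbb N_0,\pi_{\alpha,\sigma})$. For $z\in\mathbb C$, the coherent state is $\mathcal E(x,z)=\sum_{n\ge0}\frac{z^n}{n!\sigma^n}c_n(x)$ for $x\in\alpha\mathbb N_0$; explicitly $\mathcal E(\alpha n,z)=(1+\alpha z/\sigma)^n\exp(-z/\alpha)$.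 *)

(* Defs.v *)
From HB Require Import structures.
From mathcomp Require Import all_boot all_order all_algebra.
From mathcomp Require Import all_classical all_reals all_analysis.
From mathcomp Require Import complex.
Set Implicit Arguments. Unset Strict Implicit. Unset Printing Implicit Defensive.
Import Order.TTheory GRing.Theory Num.Theory.
Local Open Scope ring_scope.
Local Open Scope complex_scope.
Import numFieldNormedType.Exports.
Local Open Scope classical_set_scope.

Section Charlier.
Variable R : realType.
Local Notation C := R[i].

Definition cexp (z : C) : C :=
  let: x +i* y := z in (expR x * cos y) +i* (expR x * sin y).

Definition cabs2 (z : C) : R := let: a +i* b := z in a ^+ 2 + b ^+ 2.

Variables alpha sigma : R.

Definition spar : R := sigma / alpha ^+ 2.

(* weight pi_{alpha,sigma}({alpha n}) = exp(-s) s^n / n! *)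
Definition weight (n : nat) : R := expR (- spar) * spar ^+ n / (n`!)%:R.

(* c_n(x): coefficient of t^n/n! in
   exp((x/alpha) log(1 + t alpha) - sigma t / alpha)
   = (1 + t alpha)^(x/alpha) * exp(- sigma t / alpha), i.e.
   c_n(x) = sum_k C(n,k) (prod_{j<k} (x - j alpha)) (-sigma/alpha)^(n-k). *)
Definition cpoly (n : nat) (x : C) : C :=
  \sum_(k < n.+1) ('C(n, k))%:R * (\prod_(j < k) (x - (j%:R * alpha)%:C))
                  * ((- (sigma / alpha))%:C) ^+ (n - k).

(* Functions on alpha N_0 are represented as sequences f : nat -> C,
   f n standing for the value at the point alpha * n. *)
Definition fun_on_grid := nat -> C.

Definition wnorm2 (f : fun_on_grid) : \bar R :=
  (\sum_(0 <= n <oo) ((weight n * cabs2 (f n))%:E))%E.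

Definition inL2 (f : fun_on_grid) : Prop := (wnorm2 f < +oo)%E.

Definition polyfun (a : seq C) : fun_on_grid :=
  fun n => \sum_(i < size a) a`_i * cpoly i ((alpha * n%:R)%:C).

(* partial^- applied to sum_i a_i c_i, i.e. sum_i a_i i c_{i-1},
   restricted to alpha N_0 (c_{-1} := 0; the i = 0 term vanishes) *)
Definition dminus_polyfun (a : seq C) : fun_on_grid :=
  fun n => \sum_(i < size a) a`_i * i%:R * cpoly i.-1 ((alpha * n%:R)%:C).

Definition in_graph_closure (f g : fun_on_grid) : Prop :=
  inL2 f /\ inL2 g /\
  exists a : nat -> seq C,
    (fun k => wnorm2 (fun n => polyfun (a k) n - f n)) @ \oo --> 0%E /\
    (fun k => wnorm2 (fun n => dminus_polyfun (a k) n - g n)) @ \oo --> 0%E.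

(* closable: the closure of the graph is the graph of an operator *)
Definition dminus_closable : Prop :=
  forall f g1 g2, in_graph_closure f g1 -> in_graph_closure f g2 -> g1 = g2.

Definition coherent (z : C) : fun_on_grid :=
  fun n => (1 + alpha%:C * z / sigma%:C) ^+ n * cexp (- z / alpha%:C).

End Charlier.

(* Main.v *)
Require Import Defs.
From HB Require Import structures.
From mathcomp Require Import all_boot all_order all_algebra.
From mathcomp Require Import all_classical all_reals all_analysis.
From mathcomp Require Import complex ring lra.
Import Order.TTheory GRing.Theory Num.Theory.
Local Open Scope ring_scope.
Local Open Scope complex_scope.
Import numFieldNormedType.Exports.
Local Open Scope classical_set_scope.

Lemma sum_widen (V : zmodType) n1 n2 (F : nat -> V) : (n1 <= n2)%N ->
  (forall i, (n1 <= i)%N -> (i < n2)%N -> F i = 0) ->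
  \sum_(i < n2) F i = \sum_(i < n1) F i.
Proof.
move=> le F0; rewrite (big_ord_widen _ F le) [RHS]big_mkcond; apply: eq_bigr => i _.
by case: ifP => // /negbT; rewrite -leqNgt => h; rewrite F0.
Qed.

Lemma sum_widen_le (D : numDomainType) n1 n2 (F : nat -> D) : (n1 <= n2)%N ->
  (forall i, 0 <= F i) -> \sum_(i < n1) F i <= \sum_(i < n2) F i.
Proof.
move=> le F0; rewrite (big_ord_widen _ F le) [X in _ <= X](bigID (fun i : 'I_n2 => (i < n1)%N)) /=.
by rewrite lerDl sumr_ge0.
Qed.

Section Alg.
Variable R : realType.
Local Notation C := R[i].
Variables alpha sigma : R.
Hypothesis ha : 0 < alpha.
Hypothesis hs : 0 < sigma.

Definition Pf (k : nat) (x : C) : C := \prod_(j < k) (x - (j%:R * alpha)%:C).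

Lemma rcD (a b : R) : (a + b)%:C = a%:C + b%:C :> C.
Proof. by rewrite rmorphD. Qed.
Lemma rcM (a b : R) : (a * b)%:C = a%:C * b%:C :> C.
Proof. by rewrite rmorphM. Qed.
Lemma rcN (a : R) : (- a)%:C = - a%:C :> C.
Proof. by rewrite rmorphN. Qed.
Lemma rcn (n : nat) : (n%:R : R)%:C = n%:R :> C.
Proof. by rewrite rmorph_nat. Qed.

Lemma Pf_shift k x : Pf k.+1 (x + alpha%:C) - Pf k.+1 x = k.+1%:R * alpha%:C * Pf k x.
Proof.
rewrite /Pf big_ord_recl big_ord_recr /=.
have -> : \prod_(i < k) (x + alpha%:C - ((bump 0 i)%:R * alpha)%:C) = \prod_(j < k) (x - (j%:R * alpha)%:C).
  apply: eq_bigr => i _; rewrite /bump /= add1n -addn1 natrD mulrDl mul1r rcD; ring.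
rewrite rcM !rcn; ring.
Qed.

Lemma cpoly_shift i x : cpoly alpha sigma i (x + alpha%:C) - cpoly alpha sigma i x
   = alpha%:C * i%:R * cpoly alpha sigma i.-1 x.
Proof.
rewrite /cpoly -sumrB; case: i => [|n].
  by rewrite big_ord1 /= !big_ord0 subrr mulr0 mul0r.
rewrite big_ord_recl /= !big_ord0 subrr add0r /=.
rewrite mulr_sumr; apply: eq_bigr => j _.
have e := Pf_shift j x; rewrite /Pf in e.
rewrite /bump /= add1n subSS.
move: e.
move: (\prod_(j0 < j.+1) (x + alpha%:C - (j0%:R * alpha)%:C)) => A.
move: (\prod_(j0 < j.+1) (x - (j0%:R * alpha)%:C)) => B.
move: (\prod_(j0 < j) (x - (j0%:R * alpha)%:C)) => Q.
move: ((- (sigma / alpha))%:C ^+ (n - j)) => s e.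
have h : ('C(n.+1, j.+1) * j.+1 = n.+1 * 'C(n, j))%N by rewrite mulnC -mul_bin_diag.
have h2 : ('C(n.+1, j.+1) %:R * j.+1%:R : C) = n.+1%:R * 'C(n, j)%:R by rewrite -!natrM h.
transitivity ('C(n.+1, j.+1)%:R * (A - B) * s); first ring.
rewrite e.
transitivity (('C(n.+1, j.+1) %:R * j.+1%:R : C) * alpha%:C * Q * s); first ring.
rewrite h2; ring.
Qed.

Lemma gridS n : (alpha * n.+1%:R)%:C = (alpha * n%:R)%:C + alpha%:C :> C.
Proof. by rewrite -rcD -[n.+1]addn1 natrD mulrDr mulr1. Qed.

Lemma alphaC_neq0 : alpha%:C != 0 :> C.
Proof. apply/eqP; case=> h; move: ha; rewrite h ltxx. by []. Qed.


Lemma dminus_diff (a : seq C) n :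
  dminus_polyfun alpha sigma a n = (polyfun alpha sigma a n.+1 - polyfun alpha sigma a n) / alpha%:C.
Proof.
rewrite /dminus_polyfun /polyfun -sumrB mulr_suml; apply: eq_bigr => i _.
rewrite gridS -mulrBr cpoly_shift.
by field; rewrite alphaC_neq0.
Qed.

Lemma cpoly0 i : cpoly alpha sigma i ((alpha * 0%:R)%:C) = ((- (sigma / alpha))%:C) ^+ i.
Proof.
rewrite /cpoly big_ord_recl /= big_ord0 bin0 subn0 mul1r mul1r.
rewrite big1 ?addr0 // => j _.
rewrite big_ord_recl /= mulr0 mul0r subrr mul0r mulr0 mul0r //.
Qed.


Definition Qf N k n : C := \sum_(i < N) 'C(k, i)%:R * ((sigma / alpha)%:C) ^+ (k - i)
    * cpoly alpha sigma i ((alpha * n%:R)%:C).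

Lemma Qf_val k : forall N n, (k < N)%N -> Qf N k n = alpha%:C ^+ k * (k`! * 'C(n, k))%:R.
Proof.
elim: k => [|k IH] N n.
  case: N => // N _; rewrite /Qf big_ord_recl big1 ?addr0.
    by rewrite /cpoly big_ord1 /= !big_ord0 !bin0 !expr0 !mulr1.
  by move=> i _; rewrite bin0n mul0r mul0r.
case: N => // N hN.
elim: n => [|n IHn].
  rewrite bin0n muln0 mulr0.
  rewrite /Qf (@sum_widen _ k.+2 N.+1 (fun i => 'C(k.+1, i)%:R * ((sigma / alpha)%:C) ^+ (k.+1 - i) * cpoly alpha sigma i ((alpha * 0%:R)%:C))) //; last first.
    by move=> i hi _; rewrite bin_small // mul0r mul0r.
  under eq_bigr => i _ do rewrite cpoly0.
  transitivity (((sigma / alpha)%:C + (- (sigma / alpha))%:C) ^+ k.+1 : C); last first.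
    by rewrite rcN subrr expr0n.
  rewrite exprDn; apply: eq_bigr => i _; rewrite -mulr_natl; ring.
have step : Qf N.+1 k.+1 n.+1 - Qf N.+1 k.+1 n = k.+1%:R * alpha%:C * Qf N k n.
  rewrite /Qf -sumrB gridS big_ord_recl /= -mulrBr cpoly_shift mulr0 !mul0r mulr0 add0r mulr_sumr.
  apply: eq_bigr => i _.
  rewrite -mulrBr cpoly_shift /bump /= add1n subSS.
  have h : ('C(k.+1, i.+1) * i.+1 = k.+1 * 'C(k, i))%N by rewrite mulnC -mul_bin_diag.
  have h2 : ('C(k.+1, i.+1) %:R * i.+1%:R : C) = k.+1%:R * 'C(k, i)%:R by rewrite -!natrM h.
  move: (cpoly alpha sigma i _) ((sigma / alpha)%:C ^+ (k - i)) => c g.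
  transitivity (('C(k.+1, i.+1) %:R * i.+1%:R : C) * alpha%:C * g * c); first ring.
  rewrite h2; ring.
have e : Qf N.+1 k.+1 n.+1 = Qf N.+1 k.+1 n + k.+1%:R * alpha%:C * Qf N k n.
  by rewrite -step addrC subrK.
rewrite e IHn (IH N) // binS factS !natrM natrD exprS; ring.
Qed.


Lemma cabs2_ge0 (x : C) : 0 <= cabs2 x.
Proof. by case: x => a b /=; rewrite addr_ge0 // sqr_ge0. Qed.

Lemma normC_cabs2 (x : C) : `|x| = (Num.sqrt (cabs2 x))%:C.
Proof. by case: x. Qed.

Lemma cabs2_le (x : C) r : 0 <= r -> `|x| <= r%:C -> cabs2 x <= r ^+ 2.
Proof.
move=> r0; rewrite normC_cabs2 lecR => h.
rewrite -(ler_sqrt _ (sqr_ge0 r)) sqrtr_sqr ger0_norm //.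
Qed.

Lemma weight_gt0 n : 0 < weight alpha sigma n.
Proof.
rewrite /weight divr_gt0 ?expR_gt0 // ?ltr0n ?fact_gt0 //.
by rewrite mulr_gt0 ?expR_gt0 // exprn_gt0 // /spar divr_gt0 // exprn_gt0.
Qed.

Section Bnd.
Variables B rho : R.
Hypothesis hB : 0 <= B.
Hypothesis hrho : 0 <= rho.

Definition bnd n := weight alpha sigma n * (B * rho ^+ n) ^+ 2.

Lemma bnd_ge0 n : 0 <= bnd n.
Proof. by rewrite /bnd mulr_ge0 ?sqr_ge0 // ltW // weight_gt0. Qed.

Lemma bndE n : bnd n = (expR (- spar alpha sigma) * B ^+ 2) * exp_coeff (spar alpha sigma * rho ^+ 2) n.
Proof.
rewrite /bnd /weight /exp_coeff /=.
have e : (spar alpha sigma * rho ^+ 2) ^+ n = spar alpha sigma ^+ n * (rho ^+ n) ^+ 2.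
  by rewrite exprMn -!exprM mulnC.
rewrite e; ring.
Qed.

Lemma bnd_fin : (\sum_(0 <= n <oo) (bnd n)%:E < +oo)%E.
Proof.
under eq_eseriesr => n _ do rewrite bndE EFinM.
rewrite nneseriesZl; last by move=> n _; rewrite lee_fin exp_coeff_ge0 // mulr_ge0 ?sqr_ge0 // ltW // divr_gt0 // exprn_gt0.
have -> : (\sum_(0 <= n <oo) (exp_coeff (spar alpha sigma * rho ^+ 2) n)%:E)%E = (expR (spar alpha sigma * rho ^+ 2))%:E.
  rewrite /expR -EFin_lim; last exact: is_cvg_series_exp_coeff.
  by apply/congr_lim/funext => N /=; rewrite /series /= sumEFin.
by rewrite -EFinM ltry.
Qed.


Lemma term_le (x : C) n : `|x| <= (B * rho ^+ n)%:C ->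
  (weight alpha sigma n * cabs2 x <= bnd n).
Proof.
move=> h; rewrite /bnd ler_wpM2l ?(ltW (weight_gt0 _)) //.
by apply: cabs2_le => //; rewrite mulr_ge0 // exprn_ge0.
Qed.

Lemma term_ge0 (x : C) n : 0 <= weight alpha sigma n * cabs2 x.
Proof. by rewrite mulr_ge0 ?cabs2_ge0 // ltW // weight_gt0. Qed.

Lemma L2_of_bound (h : nat -> C) : (forall n, `|h n| <= (B * rho ^+ n)%:C) ->
  inL2 alpha sigma h.
Proof.
move=> hb; rewrite /inL2 /wnorm2; apply: le_lt_trans bnd_fin.
apply: lee_nneseries => [n _ _|n _]; first by rewrite lee_fin term_ge0.
by rewrite lee_fin term_le.
Qed.

Lemma cvg_of_bound (h : nat -> nat -> C) :
  (forall K n, `|h K n| <= (B * rho ^+ n)%:C) ->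
  (forall K n, (n < K)%N -> h K n = 0) ->
  (fun K => wnorm2 alpha sigma (h K)) @ \oo --> 0%E.
Proof.
move=> hb h0.
apply: (@squeeze_cvge _ _ _ _ (fun=> 0%E) _ (fun K => \sum_(K <= n <oo) (bnd n)%:E)%E).
- apply: nearW => K; apply/andP; split.
    by rewrite /wnorm2; apply: nneseries_ge0 => n _ _; rewrite lee_fin term_ge0.
  rewrite /wnorm2 (nneseries_split 0 K); last by move=> n _; rewrite lee_fin term_ge0.
  rewrite add0n big_mkord big1 ?add0e; last first.
    by move=> i _; rewrite h0 // /cabs2 /= expr0n /= addr0 mulr0.
  apply: lee_nneseries => [n _ _|n _]; first by rewrite lee_fin term_ge0.
  by rewrite lee_fin term_le.
- exact: cvg_cst.
- apply: nneseries_tail_cvg; first exact: bnd_fin.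
  by move=> n _; rewrite lee_fin bnd_ge0.
Qed.

End Bnd.

Definition reC (x : C) : R := let: a +i* _ := x in a.
Definition imC (x : C) : R := let: _ +i* b := x in b.

Lemma reC_comb x y z r : reC (x - (y - z) * r%:C) = reC x - (reC y - reC z) * r.
Proof. by case: x => ? ?; case: y => ? ?; case: z => ? ? /=; ring. Qed.
Lemma imC_comb x y z r : imC (x - (y - z) * r%:C) = imC x - (imC y - imC z) * r.
Proof. by case: x => ? ?; case: y => ? ?; case: z => ? ? /=; ring. Qed.

Lemma sq_lt (a b e : R) : 0 < e -> `|a ^+ 2 + b ^+ 2| < e ^+ 2 -> `|a| < e.
Proof.
move=> e0; rewrite ger0_norm ?addr_ge0 ?sqr_ge0 // => h.
rewrite ltr_norml; apply/andP; split; nra.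
Qed.

Lemma re_cvg0 (u : nat -> C) : (fun k => cabs2 (u k)) @ \oo --> 0 ->
  ((fun k => reC (u k)) @ \oo --> 0) /\ ((fun k => imC (u k)) @ \oo --> 0).
Proof.
move=> H; split; apply/cvgr0Pnorm_lt => e e0;
  have Hn := @cvgr0_norm_lt _ _ _ _ eventually_filter _ H _ (exprn_gt0 2 e0);
  move: Hn; apply: filterS => k; case: (u k) => a b /=.
  exact: sq_lt.
by rewrite addrC; exact: sq_lt.
Qed.

Lemma term_cvg0 (u : nat -> nat -> C) m :
  (fun k => wnorm2 alpha sigma (u k)) @ \oo --> 0%E ->
  (fun k => cabs2 (u k m)) @ \oo --> 0.
Proof.
move=> H.
have le k : ((weight alpha sigma m * cabs2 (u k m))%:E <= wnorm2 alpha sigma (u k))%E.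
  rewrite /wnorm2; apply: le_trans (nneseries_lim_ge m.+1 _); last first.
    by move=> n _ _; rewrite lee_fin term_ge0.
  rewrite big_nat_recr //= leeDr // sume_ge0 // => i _.
  by rewrite lee_fin term_ge0.
have H2 : (fun k => (weight alpha sigma m * cabs2 (u k m))%:E) @ \oo --> 0%E.
  apply: (@squeeze_cvge _ _ _ _ (fun=> 0%E) _ (fun k => wnorm2 alpha sigma (u k))) => //.
  - by apply: nearW => k; rewrite le andbT lee_fin term_ge0.
  - exact: cvg_cst.
have H3 := @fine_cvg _ _ _ eventually_filter _ _ H2.
have H4 := cvgMl_tmp (a := (weight alpha sigma m)^-1) H3.
have H5 := H4 eventually_filter; rewrite mulr0 in H5.
suff -> : (fun k => cabs2 (u k m)) = (fun x => (weight alpha sigma m)^-1 *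
    (fine \o (fun k => (weight alpha sigma m * cabs2 (u k m))%:E)) x) by [].
apply/funext => k /=.
by rewrite mulrA mulVf ?mul1r // gt_eqF // weight_gt0.
Qed.


Lemma cst_cvg0 (c : R) (s : nat -> R) : (forall k, s k = c) -> s @ \oo --> 0 -> c = 0.
Proof.
move=> e H.
have es : s = fun=> c by apply/funext.
rewrite es in H.
have := cvg_lim _ H; rewrite lim_cst //; by apply.
Qed.

Lemma invC : (alpha^-1)%:C = (alpha%:C)^-1 :> C.
Proof. by rewrite fmorphV. Qed.

Lemma closure_pointwise f g : in_graph_closure alpha sigma f g ->
  forall n, g n = (f n.+1 - f n) / alpha%:C.
Proof.
move=> [_ [_ [a [H1 H2]]]] n.
pose u := fun k m => polyfun alpha sigma (a k) m - f m.
pose v := fun k m => dminus_polyfun alpha sigma (a k) m - g m.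
have Hu m := re_cvg0 (fun k => u k m) (term_cvg0 u m H1).
have Hv m := re_cvg0 (fun k => v k m) (term_cvg0 v m H2).
pose D := (f n.+1 - f n) / alpha%:C - g n.
have eD k : D = v k n - (u k n.+1 - u k n) * (alpha^-1)%:C.
  rewrite /D /v /u dminus_diff invC; field; exact: alphaC_neq0.
have [[Hu1r Hu1i] [Hu0r Hu0i]] := (Hu n.+1, Hu n).
have [Hvr Hvi] := Hv n.
have Rr := @cvgB _ _ _ _ eventually_filter _ _ _ _ Hvr
  (cvgMr_tmp (b := alpha^-1) (@cvgB _ _ _ _ eventually_filter _ _ _ _ Hu1r Hu0r)).
have Ri := @cvgB _ _ _ _ eventually_filter _ _ _ _ Hvi
  (cvgMr_tmp (b := alpha^-1) (@cvgB _ _ _ _ eventually_filter _ _ _ _ Hu1i Hu0i)).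
move: Rr Ri => /(_ eventually_filter) Rr /(_ eventually_filter) Ri.
rewrite subrr mul0r subrr in Rr Ri.
have eR : reC D = 0.
  apply: (@cst_cvg0 (reC D) _ _ Rr) => k /=.
  by rewrite (eD k) reC_comb.
have eI : imC D = 0.
  apply: (@cst_cvg0 (imC D) _ _ Ri) => k /=.
  by rewrite (eD k) imC_comb.
have : D = 0 by clear eD; move: eR eI; case: D => ? ? /= -> ->.
by rewrite /D => /eqP; rewrite subr_eq0 => /eqP.
Qed.

Lemma closable : dminus_closable alpha sigma.
Proof.
move=> f g1 g2 h1 h2; apply/funext => n.
by rewrite (closure_pointwise _ _ h1) (closure_pointwise _ _ h2).
Qed.

Section Coh.
Variable z : C.

Definition tt : C := z / sigma%:C.
Definition ww : C := alpha%:C * tt.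
Definition c0 : C := cexp (- z / alpha%:C).
Definition dK k : C := c0 * tt ^+ k / (k`!)%:R.
Definition coef K i : C := \sum_(k < K.+1) dK k * 'C(k, i)%:R * ((sigma / alpha)%:C) ^+ (k - i).
Definition aK K : seq C := mkseq (coef K) K.+1.
Definition qK K n : C := c0 * \sum_(k < K.+1) 'C(n, k)%:R * ww ^+ k.

Lemma fact_neq0 k : (k`!)%:R != 0 :> C.
Proof. by rewrite pnatr_eq0 -lt0n fact_gt0. Qed.

Lemma polyfun_aK K n : polyfun alpha sigma (aK K) n = qK K n.
Proof.
rewrite /polyfun size_mkseq.
under eq_bigr => i _ do rewrite nth_mkseq // /coef mulr_suml.
rewrite exchange_big /= /qK mulr_sumr; apply: eq_bigr => k _.
transitivity (dK k * Qf (K.+1) k n).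
  by rewrite /Qf mulr_sumr; apply: eq_bigr => i _; ring.
rewrite Qf_val // /dK /ww [(alpha%:C * tt) ^+ k]exprMn natrM.
by field; rewrite fact_neq0.
Qed.

Lemma coherentE n : coherent alpha sigma z n = qK n n.
Proof.
rewrite /coherent /qK /ww /tt mulrC; congr (_ * _).
rewrite mulrA addrC exprD1n; apply: eq_bigr => i _.
by rewrite mulr_natl.
Qed.

Lemma diff0 K n : (n <= K)%N -> qK K n - coherent alpha sigma z n = 0.
Proof.
move=> le; rewrite coherentE /qK.
rewrite (@sum_widen _ n.+1 K.+1 (fun k => 'C(n, k)%:R * ww ^+ k)) ?subrr //.
by move=> i hi _; rewrite bin_small // mul0r.
Qed.

Definition nr (x : C) : R := Num.sqrt (cabs2 x).
Lemma nr_ge0 x : 0 <= nr x. Proof. exact: sqrtr_ge0. Qed.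
Lemma normE x : `|x| = (nr x)%:C. Proof. exact: normC_cabs2. Qed.

Definition rho := 1 + nr ww.
Lemma rho_ge0 : 0 <= rho. Proof. by rewrite addr_ge0 ?nr_ge0. Qed.

Lemma sumbound n K : `|\sum_(k < K.+1) 'C(n, k)%:R * ww ^+ k| <= (rho ^+ n)%:C.
Proof.
apply: le_trans (ler_norm_sum _ _ _) _.
under eq_bigr => k _ do rewrite normrM normr_nat normrX normE.
apply: le_trans (@sum_widen_le _ K.+1 (K.+1 + n) (fun k => 'C(n, k)%:R * (nr ww)%:C ^+ k) _ _) _.
- exact: leq_addr.
- by move=> i; rewrite mulr_ge0 ?ler0n // exprn_ge0 // ler0c nr_ge0.
rewrite (@sum_widen _ n.+1 (K.+1 + n) (fun k => 'C(n, k)%:R * (nr ww)%:C ^+ k)).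
- rewrite /rho rmorphXn rmorphD /= rmorph1 addrC exprD1n le_eqVlt; apply/orP; left; apply/eqP.
  by apply: eq_bigr => i _; rewrite mulr_natl.
- by rewrite addSn ltnS leq_addl.
- by move=> i hi _; rewrite bin_small // mul0r.
Qed.

Lemma qK_bound K n : `|qK K n| <= (nr c0 * rho ^+ n)%:C.
Proof.
rewrite /qK normrM rmorphM normE ler_wpM2l ?ler0c ?nr_ge0 //.
exact: sumbound.
Qed.

Lemma E_bound n : `|coherent alpha sigma z n| <= (nr c0 * rho ^+ n)%:C.
Proof. rewrite coherentE; exact: qK_bound. Qed.

Definition B1 := 2 * nr c0.

Lemma h1_bound K n : `|qK K n - coherent alpha sigma z n| <= (B1 * rho ^+ n)%:C.
Proof.
apply: le_trans (ler_normB _ _) _.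
have -> : (B1 * rho ^+ n) = nr c0 * rho ^+ n + nr c0 * rho ^+ n by rewrite /B1; ring.
by rewrite rmorphD lerD ?qK_bound ?E_bound.
Qed.

Lemma E_shift n : coherent alpha sigma z n.+1 - coherent alpha sigma z n
   = alpha%:C * tt * coherent alpha sigma z n.
Proof.
rewrite /coherent /tt exprS; ring.
Qed.

Definition gz n : C := tt * coherent alpha sigma z n.

Lemma h2E K n : dminus_polyfun alpha sigma (aK K) n - gz n =
  ((qK K n.+1 - coherent alpha sigma z n.+1) - (qK K n - coherent alpha sigma z n)) * (alpha^-1)%:C.
Proof.
rewrite dminus_diff !polyfun_aK invC /gz.
have e := E_shift n.
have -> : qK K n.+1 - coherent alpha sigma z n.+1 - (qK K n - coherent alpha sigma z n)
   = (qK K n.+1 - qK K n) - (coherent alpha sigma z n.+1 - coherent alpha sigma z n) by ring.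
rewrite e; field; exact: alphaC_neq0.
Qed.

Definition B2 := B1 * (rho + 1) / alpha.

Lemma h2_bound K n : `|dminus_polyfun alpha sigma (aK K) n - gz n| <= (B2 * rho ^+ n)%:C.
Proof.
rewrite h2E normrM (ger0_norm (x := (alpha^-1)%:C)); last by rewrite ler0c invr_ge0 ltW.
apply: le_trans (ler_wpM2r _ (ler_normB _ _)) _; first by rewrite ler0c invr_ge0 ltW.
have -> : B2 * rho ^+ n = (B1 * rho ^+ n.+1 + B1 * rho ^+ n) * alpha^-1.
  by rewrite /B2 exprS; field; rewrite gt_eqF.
rewrite rmorphM rmorphD ler_wpM2r ?ler0c ?invr_ge0 ?(ltW ha) //.
by rewrite lerD ?h1_bound.
Qed.

End Coh.

Lemma sigmaC_neq0 : sigma%:C != 0 :> C.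
Proof. apply/eqP; case=> h; move: hs; rewrite h ltxx. by []. Qed.

Lemma main_inside : dminus_closable alpha sigma /\
  (forall z : C, exists g : nat -> C,
      in_graph_closure alpha sigma (coherent alpha sigma z) g /\
      (forall n, sigma%:C * g n = z * coherent alpha sigma z n)).
Proof.
split; first exact: closable.
move=> z; exists (gz z); split; last first.
  by move=> n; rewrite /gz /tt; field; rewrite sigmaC_neq0.
split.
  apply: (@L2_of_bound (nr (c0 z)) (rho z) (nr_ge0 _) (rho_ge0 z)).
  exact: E_bound.
split.
  apply: (@L2_of_bound (nr (tt z) * nr (c0 z)) (rho z) _ (rho_ge0 z)).
    by rewrite mulr_ge0 ?nr_ge0.
  move=> n; rewrite /gz normrM normE -mulrA rmorphM.
  by apply: ler_wpM2l; [rewrite ler0c nr_ge0 | exact: E_bound].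
exists (aK z); split.
  apply: (@cvg_of_bound (B1 z) (rho z) _ (rho_ge0 z)
     (fun K n => polyfun alpha sigma (aK z K) n - coherent alpha sigma z n)).
  - by rewrite /B1 mulr_ge0 ?nr_ge0.
  - by move=> K n; rewrite polyfun_aK; exact: h1_bound.
  - by move=> K n hn; rewrite polyfun_aK diff0 // ltnW.
apply: (@cvg_of_bound (B2 z) (rho z) _ (rho_ge0 z)
   (fun K n => dminus_polyfun alpha sigma (aK z K) n - gz z n)).
- rewrite /B2 /B1; apply: divr_ge0; last exact: ltW.
  apply: mulr_ge0; last by rewrite addr_ge0 ?rho_ge0.
  by apply: mulr_ge0; [rewrite ler0n | exact: nr_ge0].
- by move=> K n; exact: h2_bound.
- by move=> K n hn; rewrite h2E !diff0 ?subrr ?mul0r // ltnW.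
Qed.
End Alg.

Theorem proposition4p7 (R : realType) (alpha sigma : R) :
  0 < alpha -> 0 < sigma ->
  dminus_closable alpha sigma /\
  (forall z : R[i], exists g : nat -> R[i],
      in_graph_closure alpha sigma (coherent alpha sigma z) g /\
      (forall n, sigma%:C * g n = z * coherent alpha sigma z n)).
Proof.
move=> ha hs; exact: main_inside ha hs.
Qed.
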